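(* Let $r, s, m, n$ be positive integers, let $f: [nm] \rightarrow \{-r,s\}$ be a function, and let $q = \frac{1}{n} f([nm])$. For $1\le i\le m$ let $I_i=\{(i-1)n+1,(i-1)n+2,\dots,in\}$. Then $[nm]$ can be decomposed into $n$ disjoint $(2n-1)$-bounded gap sequences $S_1, S_2, \ldots, S_n$, each of cardinality $m$, such that \[\lambda(q,r,s,m) \le f(S_j) \le \Lambda(q,r,s,m)\] and $|S_j \cap I_i| =1$ for all $1 \le j \le n$ and all $1 \le i \le m$.
   Context: $[N]=\{1,\dots,N\}$; $f(Y)=\sum_{y\in Y}f(y)$. A $d$-bounded gap sequence is a set of integers $a_1<a_2<\dots<a_k$ with $a_{i+1}-a_i\le d$ for all $1\le i\le k-1$. $L(r,s,m)=\{-rx+sy : x,y\in\mathbb{Z}, x,y\ge 0, x+y=m\}$, and for real $q\in[-rm,sm]$, $\lambda(q,r,s,m)=\max\{p\in L(r,s,m): p\le q\}$ and $\Lambda(q,r,s,m)=\min\{p\in L(r,s,m): p\ge q\}$. *)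

(* Defs.v *)
From mathcomp Require Import all_boot all_order all_algebra.
Set Implicit Arguments. Unset Strict Implicit. Unset Printing Implicit Defensive.
Import Order.TTheory GRing.Theory Num.Theory.
Local Open Scope ring_scope.

(* [N] = {1,...,N} is represented by naturals k with 1 <= k <= N. *)

(* f(Y) = sum_{y in Y} f y, for a finite set Y listed as a (duplicate-free) seq *)
Definition fsum (f : nat -> int) (Y : seq nat) : int := \sum_(y <- Y) f y.

Definition bounded_gap (d : nat) (s : seq nat) : bool :=
  sorted (fun a b => (a < b)%N && (b <= a + d)%N) s.

Definition Lval (r s m x : nat) : int := - (r * x)%:Z + (s * (m - x))%:Z.

Definition Lseq (r s m : nat) : seq int := [seq Lval r s m x | x <- iota 0 m.+1].

(* lambda(q,r,s,m) = max { p in L : p <= q }.  The default value -rm is the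
   minimum of L, which is <= q for every q in the domain [-rm, sm]. *)
Definition lambda (q : rat) (r s m : nat) : int :=
  foldr Num.max (- (r * m)%:Z) [seq p <- Lseq r s m | p%:~R <= q].

(* Lambda(q,r,s,m) = min { p in L : p >= q }.  Default sm is max of L. *)
Definition Lambda (q : rat) (r s m : nat) : int :=
  foldr Num.min ((s * m)%:Z) [seq p <- Lseq r s m | q <= p%:~R].

(* Main.v *)
Require Import Defs.
From mathcomp Require Import all_boot all_order all_algebra zify.
Import Order.TTheory GRing.Theory Num.Theory.

Definition negf (f : nat -> int) (k : nat) : bool := (f k < 0)%R.
Definition Nf f k := count (negf f) (iota 1 k.-1).
Definition lab f n k := if negf f k then Nf f k %% n else (n*k + Nf f k - k) %% n.

Lemma Nf_split f k d : 0 < k -> Nf f (k + d) = Nf f k + count (negf f) (iota k d).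
Proof.
move=> hk; rewrite /Nf; have -> : (k + d).-1 = k.-1 + d by lia.
by rewrite iotaD count_cat; congr (_ + count _ (iota _ _)); lia.
Qed.

Lemma Nf_le f k : Nf f k <= k.-1.
Proof. by rewrite /Nf; apply: leq_trans (count_size _ _) _; rewrite size_iota. Qed.

Lemma mod_gap n x e : 0 < e < n -> (x + e) %% n <> x %% n.
Proof.
move=> He H.
have : (x + e == x + 0 %[mod n]) by rewrite addn0 H.
rewrite eqn_modDl mod0n modn_small; lia.
Qed.

Lemma modMD n a b : (n * a + b) %% n = b %% n.
Proof. by rewrite mulnC modnMDl. Qed.

Lemma mixed n A B D e b c : 0 < e < n -> A %% n = B %% n -> B + D = n * c ->
  A + D = b * n + e -> False.
Proof.
move=> he H h1 h2.
have : (A + D) %% n = (B + D) %% n by rewrite -modnDml H modnDml.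
rewrite h1 h2 modnMDl modnMr modn_small; lia.
Qed.

Lemma lab_inj f n b k k' : 0 < n -> b*n < k -> k < k' -> k' <= b*n + n ->
  lab f n k = lab f n k' -> False.
Proof.
move=> hn h1 h2 h3.
have [d Hd] : exists d, k' = k + d.+1 by exists (k' - k).-1; lia.
subst k'.
have hk : 0 < k by lia.
rewrite /lab Nf_split // /= -/(negf f k).
set R := count _ (iota k.+1 d).
have hR : R <= d by apply: leq_trans (count_size _ _) _; rewrite size_iota.
have hN := Nf_le f k.
have hkn : k <= n * k by rewrite leq_pmull.
have hkn' : k + d.+1 <= n * (k + d.+1) by rewrite leq_pmull.
have hmul : n * (k + d.+1) = n * k + n * d.+1 by rewrite mulnDr.
set N := Nf f k.
case: (negf f k) => /=; case: (negf f (k + d.+1)) => /= H.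
-
  apply: (@mod_gap n N (1 + R)). lia. by rewrite H; congr (_ %% _); lia.
-
  apply: (@mixed n _ _ (k + d.+1 - (N + (1 + R))) (k + d - R - b * n) b (k + d.+1) _ H); lia.
- apply: (@mixed n _ _ (k - N) (k + R - b * n) b k _ (esym H)); lia.
- apply: (@mod_gap n (n * (k + d.+1) + (N + R) - (k + d.+1)) (d.+1 - R)); first lia.
  rewrite -H; have -> : n * (k + d.+1) + (N + R) - (k + d.+1) + (d.+1 - R) = n * d.+1 + (n * k + N - k) by lia.
  by rewrite modMD.
Qed.

Lemma block_count f n b j : 0 < n -> j < n ->
  count (fun k => lab f n k == j) (iota (b*n+1) n) = 1.
Proof.
move=> hn hj.
set L := map (lab f n) (iota (b*n+1) n).
have -> : count (fun k => lab f n k == j) (iota (b*n+1) n) = count_mem j L.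
  by rewrite count_map.
have uL : uniq L.
  rewrite map_inj_in_uniq ?iota_uniq // => x y; rewrite !mem_iota => hx hy E.
  case: (ltngtP x y) => // hxy.
  - exfalso; apply: (@lab_inj f n b x y) => //; lia.
  - exfalso; apply: (@lab_inj f n b y x) => //; lia.
have sub : {subset L <= iota 0 n}.
  move=> x /mapP [y _ ->]; rewrite mem_iota /= add0n /lab; by case: ifP => _; rewrite ltn_pmod.
have [_ E] := uniq_min_size uL sub (eq_leq (esym (etrans (size_map _ _) (etrans (size_iota _ _) (esym (size_iota _ _)))))).
by rewrite count_uniq_mem // E mem_iota add0n hj.
Qed.

Lemma negcount f n K j :
  count (fun k => negf f k && (lab f n k == j)) (iota 1 K) =
  count (fun t => t %% n == j) (iota 0 (Nf f K.+1)).
Proof.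
elim: K => [|K IH]; first by rewrite /Nf.
have -> : Nf f K.+2 = Nf f K.+1 + negf f K.+1.
  by rewrite -addn1 Nf_split //= addn0.
have -> : iota 1 K.+1 = iota 1 K ++ [:: K.+1] by rewrite -{1}(addn1 K) iotaD add1n.
rewrite count_cat IH /= addn0 /lab.
case: (negf f K.+1) => /=; last by rewrite !addn0.
by rewrite -[_.+1]addn1 iotaD count_cat /= addn0 add0n.
Qed.

Lemma cnt_bounds n X j : 0 < n -> j < n ->
  X <= j + count (fun t => t %% n == j) (iota 0 X) * n /\
  j + count (fun t => t %% n == j) (iota 0 X) * n < X + n.
Proof.
move=> hn hj; elim: X => [|X [IH1 IH2]]; first by rewrite /=; split; lia.
rewrite -addn1 iotaD count_cat /= add0n addn0.
set c := count _ _ in IH1 IH2 *.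
have hm : (j + c * n) %% n = j by rewrite addnC modnMDl modn_small.
case: eqP => hX.
- have e : X = j + c * n.
    case: (posnP (j + c * n - X)) => hd; first lia.
    exfalso; apply: (@mod_gap n X (j + c * n - X)); first lia.
    by rewrite hX; have -> : X + (j + c * n - X) = j + c * n by lia.
  rewrite mulnDl mul1n; lia.
- have : X <> j + c * n by move=> e; apply: hX; rewrite e hm.
  lia.
Qed.

Lemma block_single f n b j : 0 < n -> j < n ->
  exists x, [seq k <- iota (b*n+1) n | lab f n k == j] = [:: x] /\ b*n < x <= b*n+n.
Proof.
move=> hn hj; have := block_count f n b j hn hj; rewrite -size_filter.
case E: [seq k <- _ | _] => [|x [|y l]] //= _; exists x; split => //.
have : x \in [seq k <- iota (b*n+1) n | lab f n k == j] by rewrite E mem_head.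
rewrite mem_filter mem_iota => /andP [_]; lia.
Qed.

Lemma struct f n j M : 0 < n -> j < n ->
  let F := [seq k <- iota 1 (n * M.+1) | lab f n k == j] in
  [/\ size F = M.+1, bounded_gap (2*n-1) F, n*M < last 0 F <= n*M + n &
   forall i, 1 <= i <= M.+1 -> count (fun k => (i-1)*n < k <= i*n) F = 1].
Proof.
move=> hn hj; elim: M => [|M [IH1 IH2 IH3 IH4]].
- rewrite muln1 /=; have [x [E hx]] := block_single f n 0 j hn hj.
  rewrite mul0n add0n in E hx; rewrite E; split => //=; first lia.
  move=> i hi; have -> : i = 1 by lia.
  rewrite subnn mul0n mul1n addn0; lia.
- have -> : iota 1 (n * M.+2) = iota 1 (n*M.+1) ++ iota (M.+1*n + 1) n.
    by rewrite mulnSr iotaD [1 + _]addnC mulnC.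
  rewrite filter_cat.
  have [x [E hx]] := block_single f n M.+1 j hn hj.
  rewrite E; set F' := [seq k <- iota 1 (n * M.+1) | _] in IH1 IH2 IH3 IH4 *.
  have hx' : n * M.+1 < x <= n * M.+1 + n by rewrite mulnC.
  have hF' : forall k, k \in F' -> k <= n * M.+1.
    by move=> k; rewrite mem_filter mem_iota => /andP [_]; lia.
  split.
  + by rewrite size_cat IH1 /= addn1.
  + move: IH2 IH3; rewrite /bounded_gap.
    case: F' {IH1 IH4 hF'} => [|a t] //= IH2 IH3.
    rewrite cat_path IH2 /= andbT.
    rewrite mulnS in hx'; lia.
  + by rewrite last_cat /=.
  + move=> i hi; rewrite count_cat /=.
    case: (ltnP i M.+2) => hi2.
    * rewrite IH4; last lia.
      have : i * n <= M.+1 * n by rewrite leq_mul2r; apply/orP; right; lia.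
      move=> hin; have -> : (x <= i * n) = false by apply/negbTE; rewrite -ltnNge; lia.
      by rewrite andbF.
    * have -> : i = M.+2 by lia.
      rewrite (@eq_in_count _ _ pred0); last first.
        move=> k /hF' hk /=; apply/negbTE; rewrite negb_and -leqNgt.
        by apply/orP; left; rewrite subn1 /= mulnC.
      rewrite count_pred0 subn1 /= add0n addn0; lia.
Qed.

Local Open Scope ring_scope.

Lemma fsum_count f (r s : nat) l : (0 < r)%N -> (0 < s)%N ->
  (forall k, k \in l -> f k = - (r%:Z) \/ f k = s%:Z) ->
  fsum f l = - (r * count (negf f) l)%:Z + (s * (size l - count (negf f) l))%:Z.
Proof.
move=> hr hs; elim: l => [|a l IH] hf; first by rewrite /fsum big_nil /= !muln0 oppr0 addr0.
rewrite /fsum big_cons -/(fsum f l) IH; last by move=> k hk; apply: hf; rewrite inE hk orbT.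
have hc := count_size (negf f) l.
move: hc; set c := count _ _ => hc.
case: (hf a (mem_head _ _)) => E; rewrite /=.
- have -> : negf f a by rewrite /negf E oppr_lt0 ltz_nat.
  rewrite E add1n subSS mulnS PoszD opprD addrA. done.
- have -> : negf f a = false by rewrite /negf E ltNge lez_nat ltnW.
  by rewrite E add0n subSn // mulnS PoszD -/c addrCA.
Qed.
Lemma key2 (r s n M X x : nat) : (0 < r)%N -> (X <= n * M)%N -> (x <= M)%N ->
  - (r * X)%:Z + (s * (n * M - X))%:Z <= Lval r s M x * n%:Z -> (n * x <= X)%N.
Proof.
rewrite /Lval => hr h1 h2 H.
have a1 : (s * X <= s * (n * M))%N by rewrite leq_mul2l h1 orbT.
have a2 : (s * x <= s * M)%N by rewrite leq_mul2l h2 orbT.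
rewrite !mulnBr in H.
nia.
Qed.
Lemma natrat (n : nat) : (n%:Z)%:~R = n%:R :> rat.
Proof. by rewrite pmulrn. Qed.
Lemma key1 (r s n M X x : nat) : (0 < r)%N -> (X <= n * M)%N -> (x <= M)%N ->
  Lval r s M x * n%:Z <= - (r * X)%:Z + (s * (n * M - X))%:Z -> (X <= n * x)%N.
Proof.
rewrite /Lval => hr h1 h2 H.
have a1 : (s * X <= s * (n * M))%N by rewrite leq_mul2l h1 orbT.
have a2 : (s * x <= s * M)%N by rewrite leq_mul2l h2 orbT.
rewrite !mulnBr in H.
nia.
Qed.

Lemma Lval_mono r s m x y : (x <= y)%N -> (y <= m)%N -> Lval r s m y <= Lval r s m x.
Proof.
move=> h1 h2; rewrite /Lval; apply: lerD.
- by rewrite lerN2 lez_nat leq_mul2l h1 orbT.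
- by rewrite lez_nat leq_mul2l leq_sub2l ?orbT.
Qed.

Lemma Lambda_lb q r s m (v : int) :
  (forall x, (x <= m)%N -> q <= (Lval r s m x)%:~R -> v <= Lval r s m x) ->
  v <= (s * m)%:Z -> v <= Lambda q r s m.
Proof.
move=> H hv; rewrite /Lambda.
have : all (fun p => v <= p) [seq p <- Lseq r s m | q <= p%:~R].
  apply/allP => p; rewrite mem_filter => /andP [hq /mapP [x hx E]].
  rewrite E in hq *; apply: H => //; move: hx; rewrite mem_iota; lia.
elim: [seq p <- _ | _] => //= a l IH /andP [ha hl].
by rewrite le_min ha IH.
Qed.

Lemma lambda_ub q r s m (v : int) :
  (forall x, (x <= m)%N -> (Lval r s m x)%:~R <= q -> Lval r s m x <= v) ->
  - (r * m)%:Z <= v -> lambda q r s m <= v.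
Proof.
move=> H hv; rewrite /lambda.
have : all (fun p => p <= v) [seq p <- Lseq r s m | p%:~R <= q].
  apply/allP => p; rewrite mem_filter => /andP [hq /mapP [x hx E]].
  rewrite E in hq *; apply: H => //; move: hx; rewrite mem_iota; lia.
elim: [seq p <- _ | _] => //= a l IH /andP [ha hl].
by rewrite ge_max ha IH.
Qed.

Theorem theorem4p6 (r s m n : nat) (f : nat -> int)
  (hr : (0 < r)%N) (hs : (0 < s)%N) (hm : (0 < m)%N) (hn : (0 < n)%N)
  (hf : forall k, (1 <= k <= n * m)%N -> f k = - (r%:Z) \/ f k = s%:Z) :
  let q : rat := (\sum_(1 <= k < (n * m).+1) f k)%:~R / n%:R in
  exists S : 'I_n -> seq nat,
    (* S_1,...,S_n is a decomposition of [nm] into disjoint sets *)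
    (forall j k, k \in S j -> (1 <= k <= n * m)%N) /\
    (forall k, (1 <= k <= n * m)%N -> exists j, k \in S j) /\
    (forall j j' k, k \in S j -> k \in S j' -> j = j') /\
    (forall j : 'I_n,
       (* S_j is a (2n-1)-bounded gap sequence of cardinality m *)
       bounded_gap (2 * n - 1) (S j) /\ size (S j) = m /\
       lambda q r s m <= fsum f (S j) <= Lambda q r s m /\
       (* |S_j ∩ I_i| = 1 with I_i = {(i-1)n+1, ..., in} *)
       (forall i, (1 <= i <= m)%N ->
          count (fun k => ((i - 1) * n < k <= i * n)%N) (S j) = 1%N)).
Proof.
case: m hm hf => [|M] // _ hf q.
set X := count (negf f) (iota 1 (n * M.+1)).
have hX : (X <= n * M.+1)%N by rewrite /X; apply: leq_trans (count_size _ _) _; rewrite size_iota.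
have hrange : forall k, k \in iota 1 (n * M.+1) -> f k = - (r%:Z) \/ f k = s%:Z.
  by move=> k; rewrite mem_iota => hk; apply: hf; lia.
have hT : \sum_(1 <= k < (n * M.+1).+1) f k = - (r * X)%:Z + (s * (n * M.+1 - X))%:Z.
  rewrite (_ : \sum_(1 <= k < (n * M.+1).+1) f k = fsum f (iota 1 (n * M.+1))); last first.
    by rewrite /fsum /index_iota subn1.
  by rewrite (fsum_count f r s _ hr hs hrange) size_iota.
exists (fun j : 'I_n => [seq k <- iota 1 (n * M.+1) | lab f n k == j]).
split; [|split; [|split]].
- move=> j k; rewrite mem_filter mem_iota => /andP [_]; lia.
- move=> k hk.
  have hl : (lab f n k < n)%N by rewrite /lab; case: ifP => _; rewrite ltn_pmod.
  exists (Ordinal hl); rewrite mem_filter mem_iota /= eqxx /=; lia.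
- move=> j j' k; rewrite !mem_filter => /andP [/eqP e1 _] /andP [/eqP e2 _].
  by apply: val_inj; rewrite /= -e1 -e2.
- move=> j; have [h1 h2 h3 h4] := struct f n j M hn (ltn_ord j).
  set F := [seq k <- _ | _] in h1 h2 h3 h4 *.
  split => //; split => //; split; last exact: h4.
  have hxj : count (negf f) F = count (fun t => (t %% n)%N == j) (iota 0 X).
    have := negcount f n (n * M.+1) j; rewrite /Nf /= -/X => <-.
    by rewrite count_filter; apply: eq_count.
  set xj := count (negf f) F in hxj.
  have [b1 b2] := cnt_bounds n X j hn (ltn_ord j); rewrite -hxj in b1 b2.
  have hxm : (xj <= M.+1)%N by rewrite -h1 count_size.
  have hF : fsum f F = Lval r s M.+1 xj.
    rewrite (fsum_count f r s _ hr hs) ?h1 // => k; rewrite mem_filter => /andP [_ hk]; exact: hrange.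
  rewrite hF; apply/andP; split.
  + apply: lambda_ub; last first.
      by have := Lval_mono r s M.+1 xj M.+1 hxm (leqnn _); rewrite /Lval subnn muln0 addr0.
    move=> x hx hq; apply: Lval_mono => //.
    rewrite /q hT ler_pdivlMr ?ltr0n // -natrat -intrM ler_int in hq.
    have := key1 r s n M.+1 X x hr hX hx hq => hXx.
    have : (xj * n < x.+1 * n)%N by rewrite mulSn; lia.
    by rewrite ltn_pmul2r // ltnS.
  + apply: Lambda_lb; last first.
      by have := Lval_mono r s M.+1 0 xj (leq0n xj) hxm; rewrite /Lval muln0 subn0 oppr0 add0r.
    move=> x hx hq; apply: Lval_mono => //.
    rewrite /q hT ler_pdivrMr ?ltr0n // -natrat -intrM ler_int in hq.
    have := key2 r s n M.+1 X x hr hX hx hq => hXx.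
    have hj := ltn_ord j; have : (x * n < xj.+1 * n)%N by rewrite mulSn; lia.
    by rewrite ltn_pmul2r // ltnS.
Qed.
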